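(* Let $F$ be a Legendre function, $\pi_0\in\Pi_{\mathrm{all}}$, and $\Pi\subseteq\Pi_{\mathrm{all}}$ closed and convex. Suppose a mechanism produces $\widehat\pi_F\in\Pi$ such that for every $\pi^*\in\Pi$, $$\mathbb{E}[\mathsf{B}_F(\pi^*(x)\parallel\widehat\pi_F(x))]\le\mathbb{E}[\mathsf{B}_F(\pi^*(x)\parallel\pi_0(x))]-\mathbb{E}[\mathsf{B}_F(\widehat\pi_F(x)\parallel\pi_0(x))],$$ and assume that almost everywhere the relevant values lie in the interior of the domain of $F$. Let $\{\mathcal{X}_i\}_{i\in I}$ be the partition of $\mathcal{X}$ given by $x\sim x'\iff\widehat\pi_F(x)=\widehat\pi_F(x')$ and $\mathcal{C}_F=\{\pi\in\Pi:\pi(x)=\pi(x')\ \forall x,x'\in\mathcal{X}_i,\ \forall i\in I\}$. Then $\widehat\pi_F=\arg\min_{\pi\in\Pi\cap\mathcal{C}_F}\mathbb{E}[\mathsf{B}_F(\pi(x)\parallel\pi_0(x))]$, i.e., $\widehat\pi_F$ is the unique Bregman projection of $\pi_0$ onto $\Pi\cap\mathcal{C}_F$.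
   Context: $\mathcal{X},\mathcal{Y}$ finite; $\Pi_{\mathrm{all}}=\Delta(\mathcal{Y})^{\mathcal{X}}$; $\mathcal{D}_{\mathcal{X}}$ full-support distribution on $\mathcal{X}$ and $\mathbb{E}=\mathbb{E}_{x\sim\mathcal{D}_{\mathcal{X}}}$. $\mathsf{B}_F(p\parallel q)=F(p)-F(q)-\langle\nabla F(q),p-q\rangle$. A Legendre function is proper, closed, convex, differentiable on the interior $\Omega$ of its domain, with $\nabla F\colon\Omega\to\mathrm{int}(\mathrm{dom}F^* )$ a bijection. *)

(* Defs.v *)
From HB Require Import structures.
From mathcomp Require Import all_boot all_order all_algebra.
From mathcomp Require Import all_classical all_reals all_analysis.
Set Implicit Arguments. Unset Strict Implicit. Unset Printing Implicit Defensive.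
Import Order.TTheory GRing.Theory Num.Theory.
Import numFieldNormedType.Exports.
Local Open Scope classical_set_scope.
Local Open Scope ring_scope.

(* Convention: the finite label set Y is identified with 'I_n; a vector of
   R^Y is a row vector 'rV[R]_n (normed space from MathComp-Analysis).       *)

Section Defs.
Variables (R : realType) (n : nat).
Local Notation V := 'rV[R]_n.

Definition dotv (u v : V) : R := \sum_(i < n) u ord0 i * v ord0 i.

Definition simplex : set V :=
  [set p | (forall i, 0 <= p ord0 i) /\ \sum_(i < n) p ord0 i = 1].

Definition edom (F : V -> \bar R) : set V := [set x | (F x < +oo)%E].

Definition Omega (F : V -> \bar R) : set V := interior (edom F).

(* real-valued restriction of F (meaningful on dom F) *)
Definition Fr (F : V -> \bar R) : V -> R := fun x => fine (F x).

Definition gradF (F : V -> \bar R) (q : V) : V :=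
  \row_(i < n) derive (Fr F) q (delta_mx ord0 i : V).

Definition conjF (F : V -> \bar R) (y : V) : \bar R :=
  ereal_sup [set ((dotv x y)%:E - F x)%E | x in [set: V]].

(* Legendre function: proper, closed (lsc, i.e. closed epigraph), convex,
   differentiable on Omega = int(dom F), and grad F : Omega -> int(dom F^* )
   is a bijection. *)
Definition legendre (F : V -> \bar R) : Prop :=
  [/\
      (forall x, F x != -oo%E) /\ (exists x, (F x < +oo)%E),
      closed [set xt : V * R | (F xt.1 <= xt.2%:E)%E],
      (forall (x y : V) (a b t : R), 0 <= t <= 1 ->
          (F x <= a%:E)%E -> (F y <= b%:E)%E ->
          (F (t *: x + (1 - t) *: y)%R <= (t * a + (1 - t) * b)%R%:E)%E),
      (forall q, Omega F q -> differentiable (Fr F) q) &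
      [/\ (forall q, Omega F q -> Omega (conjF F) (gradF F q)),
          (forall q q', Omega F q -> Omega F q' -> gradF F q = gradF F q' -> q = q') &
          (forall y, Omega (conjF F) y -> exists2 q, Omega F q & gradF F q = y)]].

Definition bregman (F : V -> \bar R) (p q : V) : R :=
  Fr F p - Fr F q - dotv (gradF F q) (p - q).

End Defs.

Definition expect (R : realType) (X : finType) (D : X -> R) (f : X -> R) : R :=
  \sum_(x : X) D x * f x.

Definition full_support_distr (R : realType) (X : finType) (D : X -> R) : Prop :=
  (forall x, 0 < D x) /\ \sum_(x : X) D x = 1.

Definition Pi_all (R : realType) (n : nat) (X : finType) : set (X -> 'rV[R]_n) :=
  [set pi | forall x, simplex (pi x)].

Definition convex_set_pol (R : realType) (n : nat) (X : finType)
    (P : set (X -> 'rV[R]_n)) : Prop :=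
  forall p q (t : R), P p -> P q -> 0 <= t <= 1 ->
    P (fun x => t *: p x + (1 - t) *: q x).

Definition C_F (R : realType) (n : nat) (X : finType)
    (P : set (X -> 'rV[R]_n)) (pihat : X -> 'rV[R]_n) : set (X -> 'rV[R]_n) :=
  [set pi | P pi /\ forall x x', pihat x = pihat x' -> pi x = pi x'].

(* Main.v *)
Require Import Defs.
From HB Require Import structures.
From mathcomp Require Import all_boot all_order all_algebra.
From mathcomp Require Import all_classical all_reals all_analysis.
From mathcomp Require Import ring lra.
Set Implicit Arguments. Unset Strict Implicit.
Import Order.TTheory GRing.Theory Num.Theory.
Import numFieldNormedType.Exports.
Local Open Scope classical_set_scope.
Local Open Scope ring_scope.

Section A.
Variables (R : realType) (n : nat).
Local Notation V := 'rV[R]_n.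

Lemma rd_le (f : V -> R) a v c : differentiable f a ->
  (exists2 e : R, 0 < e & forall t : R, 0 < t < e -> t^-1 * (f (t *: v + a) - f a) <= c) ->
  'd f a v <= c.
Proof.
move=> df [e e0 He]; rewrite -deriveE //.
have cv : derivable f a v by exact: diff_derivable.
rewrite leNgt; apply/negP => Lc.
have := @cvgr_gt R R 0^' _ _ _ cv c Lc.
rewrite /= near_withinE. move=> /(_ _) /nbhs_ballP [e' /= e'0 H].
pose t := Num.min e e' / 2.
have t0 : 0 < t by rewrite divr_gt0 // lt_min e0 e'0.
have te : t < Num.min e e' by rewrite /t ltr_pdivrMr // ltr_pMr ?lt_min ?e0 ?e'0 // ltr1n.
have := H t; rewrite /ball /= sub0r normrN gtr0_norm //.
move: te; rewrite lt_min => /andP[te te'].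
move=> /(_ te' (lt0r_neq0 t0)).
have := He t; rewrite t0 te => /(_ isT).
rewrite /= => h1 h2. 
have := lt_le_trans h2 h1; by rewrite ltxx.
Qed.

Lemma rd_ge (f : V -> R) a v c : differentiable f a ->
  (exists2 e : R, 0 < e & forall t : R, 0 < t < e -> c <= t^-1 * (f (t *: v + a) - f a)) ->
  c <= 'd f a v.
Proof.
move=> df [e e0 He]; rewrite -deriveE //.
have cv : derivable f a v by exact: diff_derivable.
rewrite leNgt; apply/negP => Lc.
have := @cvgr_lt R R 0^' _ _ _ cv c Lc.
rewrite /= near_withinE. move=> /(_ _) /nbhs_ballP [e' /= e'0 H].
pose t := Num.min e e' / 2.
have t0 : 0 < t by rewrite divr_gt0 // lt_min e0 e'0.
have te : t < Num.min e e' by rewrite /t ltr_pdivrMr // ltr_pMr ?lt_min ?e0 ?e'0 // ltr1n.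
have := H t; rewrite /ball /= sub0r normrN gtr0_norm //.
move: te; rewrite lt_min => /andP[te te'].
move=> /(_ te' (lt0r_neq0 t0)).
have := He t; rewrite t0 te => /(_ isT).
rewrite /= => h1 h2. 
have := le_lt_trans h1 h2; by rewrite ltxx.
Qed.

Lemma dot_delta (u : V) i : dotv u (delta_mx ord0 i) = u ord0 i.
Proof.
rewrite /dotv (bigD1 i) //= big1 ?addr0.
  by rewrite mxE !eqxx mulr1.
by move=> j /negPf ji; rewrite mxE ji andbF mulr0.
Qed.

Lemma dot_d (F : V -> \bar R) q v : differentiable (Fr F) q ->
  dotv (gradF F q) v = 'd (Fr F) q v.
Proof.
move=> dF.
rewrite {2}(row_sum_delta v) linear_sum /dotv.
apply: eq_bigr => i _; rewrite linearZ /= mxE -deriveE // mulrC.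
by [].
Qed.


Lemma finE (F : V -> \bar R) x : F x != -oo%E -> (F x < +oo)%E -> F x = (Fr F x)%:E.
Proof.
move=> h1 h2; rewrite /Fr fineK //; rewrite fin_numE h1 /=; by rewrite lt_eqF.
Qed.

Lemma Omega_dom (F : V -> \bar R) x : Omega F x -> (F x < +oo)%E.
Proof. by move=> /nbhs_singleton. Qed.

Lemma subgrad (F : V -> \bar R) q z : legendre F -> Omega F q -> (F z < +oo)%E ->
  Fr F q + dotv (gradF F q) (z - q) <= Fr F z.
Proof.
move=> [[ninf _] _ cvx dif _] Oq Fz.
have Fq := @Omega_dom F q Oq.
rewrite dot_d; last exact: dif.
rewrite addrC -lerBrDr; apply: rd_le; first exact: dif.
exists 1 => // t /andP[t0 t1].
rewrite ler_pdivrMl // mulrC.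
have := cvx z q (Fr F z) (Fr F q) t.
rewrite (ltW t0) (ltW t1) -!finE // => /(_ isT (lexx _) (lexx _)).
have -> : t *: z + (1 - t) *: q = t *: (z - q) + q.
  by apply/rowP => i; rewrite !mxE; ring.
move=> h.
have : Fr F (t *: (z - q) + q) <= t * Fr F z + (1 - t) * Fr F q.
  rewrite -lee_fin -finE //; exact: (le_lt_trans h (ltry _)).
move=> h2; rewrite lerBlDr; apply: (le_trans h2).
by rewrite le_eqVlt; apply/orP; left; apply/eqP; ring.
Qed.


Lemma breg_ge0 (F : V -> \bar R) p q : legendre F -> Omega F q -> Omega F p ->
  0 <= bregman F p q.
Proof.
move=> LF Oq Op; have := subgrad LF Oq (@Omega_dom F p Op).
by rewrite /bregman subr_ge0 lerBrDl.
Qed.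

Lemma breg0 (F : V -> \bar R) p q : legendre F -> Omega F p -> Omega F q ->
  bregman F p q = 0 -> p = q.
Proof.
move=> LF Op Oq B0.
have LF' := LF; move: LF' => [[ninf _] _ cvx dif [_ inj _]].
have key : forall v, 'd (Fr F) q v <= 'd (Fr F) p v.
  move=> v; apply: rd_ge; first exact: dif.
  have Op' := Op; move: Op' => /nbhs_ballP [e /= e0 He].
  exists (e / (`|v| + 1)); first by rewrite divr_gt0 // ltr_pwDr.
  move=> t /andP[t0 te].
  have zd : edom F (t *: v + p).
    apply: He; rewrite -ball_normE /ball_ /= opprD addrCA subrr addr0 normrN normrZ.
    rewrite gtr0_norm //; apply: (le_lt_trans (y := t * (`|v| + 1))).
      by rewrite ler_wpM2l ?(ltW t0) // lerDl.
    by rewrite -ltr_pdivlMr // ltr_pwDr.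
  have := subgrad LF Oq zd.
  move: B0; rewrite /bregman !dot_d; try exact: dif.
  move=> B0 h.
  rewrite ler_pdivlMl // -linearZ /=.
  rewrite -addrA linearD /= in h.
  have -> : Fr F p = Fr F q + 'd (Fr F) q (p - q).
    by apply/eqP; rewrite -subr_eq0 opprD addrA B0.
  by rewrite lerBrDr addrCA.
have eqd : forall v, 'd (Fr F) q v = 'd (Fr F) p v.
  move=> v; have k1 := key v; have k2 := key (- v).
  have e1 : 'd (Fr F) q (- v) = - 'd (Fr F) q v by exact: raddfN.
  have e2 : 'd (Fr F) p (- v) = - 'd (Fr F) p v by exact: raddfN.
  move: k1 k2 e1 e2.
  generalize ('d (Fr F) q (- v)) ('d (Fr F) p (- v)) ('d (Fr F) q v) ('d (Fr F) p v).
  move=> a b c d k1 k2 e1 e2; subst a b; lra.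
apply: inj => //; apply/rowP => i; rewrite !mxE.
rewrite (deriveE _ (dif _ Oq)) (deriveE _ (dif _ Op)).
exact/esym/eqd.
Qed.
End A.

Lemma expect_ge0 (R : realType) (X : finType) (D : X -> R) f :
  (forall x, 0 < D x) -> (forall x, 0 <= f x) -> 0 <= expect D f.
Proof.
move=> Dp fp; rewrite /expect; apply: sumr_ge0 => x _.
by rewrite mulr_ge0 // ltW.
Qed.

Lemma expect_eq0 (R : realType) (X : finType) (D : X -> R) f :
  (forall x, 0 < D x) -> (forall x, 0 <= f x) -> expect D f <= 0 -> forall x, f x = 0.
Proof.
move=> Dp fp h x.
have e0 : expect D f = 0 by apply: le_anti; rewrite h expect_ge0.
have := @psumr_eq0P _ X (fun _ => true) (fun x => D x * f x).
have nn : forall i : X, true -> 0 <= D i * f i by move=> i _; rewrite mulr_ge0 // ltW.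
move=> /(_ nn e0 x isT) /eqP; rewrite mulf_eq0 => /orP[/eqP d0|/eqP //].
by have := Dp x; rewrite d0 ltxx.
Qed.

Theorem theorem16 (R : realType) (n : nat) (X : finType) (D : X -> R)
  (F : 'rV[R]_n -> \bar R) (pi0 pihat : X -> 'rV[R]_n)
  (Pi : set (X -> 'rV[R]_n)) :
  full_support_distr D ->
  legendre F ->
  @Pi_all R n X pi0 ->
  Pi `<=` @Pi_all R n X -> closed (Pi : set {ptws X -> 'rV[R]_n}) -> convex_set_pol Pi ->
  Pi pihat ->
  (forall pistar, Pi pistar ->
     expect D (fun x => bregman F (pistar x) (pihat x))
       <= expect D (fun x => bregman F (pistar x) (pi0 x))
          - expect D (fun x => bregman F (pihat x) (pi0 x))) ->
  (* relevant values lie in the interior of dom F *)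
  (forall x, Omega F (pi0 x)) ->
  (forall pi, Pi pi -> forall x, Omega F (pi x)) ->
  [set pi | (Pi `&` C_F Pi pihat) pi /\
            forall pi', (Pi `&` C_F Pi pihat) pi' ->
              expect D (fun x => bregman F (pi x) (pi0 x))
                <= expect D (fun x => bregman F (pi' x) (pi0 x))]
  = [set pihat].
Proof.
move=> [Dpos _] LF _ _ _ _ Pihat Hyp _ OmPi.
have Chat : (Pi `&` C_F Pi pihat) pihat by split => //; split => // x x' ->.
apply/seteqP; split.
- move=> pi [[Pipi _] Hmin] /=.
  have Hm := Hmin pihat Chat.
  have H2 := Hyp pi Pipi.
  have S0 : expect D (fun x => bregman F (pi x) (pihat x)) <= 0.
    move: Hm H2.
    generalize (expect D (fun x => bregman F (pi x) (pihat x)))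
      (expect D (fun x => bregman F (pi x) (pi0 x)))
      (expect D (fun x => bregman F (pihat x) (pi0 x))).
    move=> a b c; lra.
  have Bx := expect_eq0 Dpos (fun x => breg_ge0 LF (OmPi _ Pihat x) (OmPi _ Pipi x)) S0.
  apply/funext => x.
  exact: (breg0 LF (OmPi _ Pipi x) (OmPi _ Pihat x) (Bx x)).
- move=> _ -> /=; split => // pi' [Pipi' _].
  have H2 := Hyp pi' Pipi'.
  have A0 := expect_ge0 Dpos (fun x => breg_ge0 LF (OmPi _ Pihat x) (OmPi _ Pipi' x)).
  move: A0 H2.
  generalize (expect D (fun x => bregman F (pi' x) (pihat x)))
    (expect D (fun x => bregman F (pi' x) (pi0 x)))
    (expect D (fun x => bregman F (pihat x) (pi0 x))).
  move=> a b c; lra.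
Qed.
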